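(* Let $\mathcal{E}_\theta$ ($\theta\in[0,\pi/2]$) be the qubit channel with Kraus operators $E_0=\sqrt{\eta_\theta}\,E$, $E_1=\sqrt{1-\eta_\theta}\,ZE$, where $E=\begin{pmatrix}\cos\theta&\sin\theta\\-\sin\theta&\cos\theta\end{pmatrix}$, $Z=\mathrm{diag}(1,-1)$ and $\eta_\theta\in[0,1]$ is arbitrary. For $n\ge1$ let $E_n$ be the set of $n$-bit strings of even Hamming weight, $w(i)$ the Hamming weight, and $|\Psi_n\rangle=2^{-(n-1)/2}\sum_{i\in E_n}(-1)^{w(i)/2}|i\rangle$. Apply $\mathcal{E}_\theta^{\otimes n}$ to $|\Psi_n\rangle\langle\Psi_n|$ and measure all $n$ qubits in the computational basis. Then the probability that the outcome string has even parity is exactly $\cos^2(n\theta)$. *)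

(* Defs.v *)
From HB Require Import structures.
From mathcomp Require Import all_boot all_order all_algebra.
From mathcomp Require Import all_classical all_reals all_analysis.
Set Implicit Arguments. Unset Strict Implicit. Unset Printing Implicit Defensive.
Import Order.TTheory GRing.Theory Num.Theory.
Local Open Scope ring_scope.

(* n-bit strings: bit j of string i is (i j); false = |0>, true = |1>. *)
Definition bits (n : nat) := {ffun 'I_n -> bool}.

Definition hw (n : nat) (i : bits n) : nat := (\sum_(j < n) (i j : nat))%N.

Section Q.
Variable R : realType.

Definition Emat (t : R) (r c : bool) : R :=
  match r, c with
  | false, false => cos t
  | false, true => sin t
  | true, false => - sin t
  | true, true => cos t
  end.

(* Z = diag(1,-1); (Z E)_{r c} = (-1)^r E_{r c}. *)
Definition ZEmat (t : R) (r c : bool) : R := (-1) ^+ r * Emat t r c.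

Definition kraus (t eta : R) (k : bool) (r c : bool) : R :=
  if k then Num.sqrt (1 - eta) * ZEmat t r c else Num.sqrt eta * Emat t r c.

Definition krausN (n : nat) (t eta : R) (k : bits n) (x i : bits n) : R :=
  \prod_(j < n) kraus t eta (k j) (x j) (i j).

Definition psi (n : nat) (i : bits n) : R :=
  if ~~ odd (hw i) then (Num.sqrt 2 ^+ n.-1)^-1 * (-1) ^+ (hw i)./2 else 0.

(* rho = |Psi_n><Psi_n| (real amplitudes) *)
Definition rho (n : nat) (x y : bits n) : R := psi x * psi y.

(* Output of the channel E_t^{(x)n}: sum_k K_k rho K_k^dagger
   (all entries are real, so dagger = transpose). *)
Definition chan_out (n : nat) (t eta : R) (x y : bits n) : R :=
  \sum_(k : bits n) \sum_(i : bits n) \sum_(l : bits n)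
     krausN t eta k x i * rho i l * krausN t eta k y l.

Definition prob_even (n : nat) (t eta : R) : R :=
  \sum_(x : bits n | ~~ odd (hw x)) chan_out t eta x x.

End Q.

(* Main.v *)
Require Import Defs.
From HB Require Import structures.
From mathcomp Require Import all_boot all_order all_algebra.
From mathcomp Require Import all_classical all_reals all_analysis.
From mathcomp Require Import complex ring lra.
Import Order.TTheory GRing.Theory Num.Theory.
Local Open Scope ring_scope.
Local Open Scope complex_scope.

Section P.
Variable R : realType.

Lemma demoivre (t : R) k : (Complex (cos t) (sin t))^+k = Complex (cos (k%:R*t)) (sin (k%:R * t)).
Proof.
elim: k => [|k IH]; first by rewrite expr0 mul0r cos0 sin0.
rewrite exprS IH -natr1 mulrDl mul1r cosD sinD /=.
congr Complex; ring.
Qed.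

Lemma demoivreN (t : R) k : (Complex (cos t) (- sin t))^+k = Complex (cos (k%:R*t)) (- sin (k%:R * t)).
Proof.
elim: k => [|k IH]; first by rewrite expr0 mul0r cos0 sin0 oppr0.
rewrite exprS IH -natr1 mulrDl mul1r cosD sinD /=.
congr Complex; ring.
Qed.

Lemma key n (E : bool -> bool -> R) (z u : R[i])
  (H : forall r, \sum_(b : bool) (E r b)%:C * u ^+ b = z * u ^+ r) (x : bits n) :
  \sum_(i : bits n) (\prod_(j < n) E (x j) (i j))%:C * u ^+ (hw i) = z ^+ n * u ^+ (hw x).
Proof.
transitivity (\sum_(i : {ffun 'I_n -> bool}) \prod_(j < n) ((E (x j) (i j))%:C * u ^+ (i j))).
  apply: eq_bigr => i _; rewrite rmorph_prod /hw expr_sum -big_split //.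
rewrite -(bigA_distr_bigA (R := R[i]) (fun (j:'I_n) (b:bool) => (E (x j) b)%:C * u ^+ b)) /=.
under eq_bigr do rewrite H.
by rewrite big_split /= prodr_const card_ord /hw expr_sum.
Qed.

Lemma row1 (t : R) r : \sum_(b : bool) (Emat t r b)%:C * 'i ^+ b = Complex (cos t) (sin t) * 'i ^+ r.
Proof.
rewrite big_bool /=; case: r; rewrite /= ?expr1 ?expr0 ?mulr1; apply/eqP; rewrite eq_complex /=;
  apply/andP; split; apply/eqP; ring.
Qed.

Lemma row2 (t : R) r : \sum_(b : bool) (Emat t r b)%:C * (- 'i) ^+ b = Complex (cos t) (- sin t) * (- 'i) ^+ r.
Proof.
rewrite big_bool /=; case: r; rewrite /= ?expr1 ?expr0 ?mulr1; apply/eqP; rewrite eq_complex /=;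
  apply/andP; split; apply/eqP; ring.
Qed.

Lemma gC (w : nat) : (if ~~ odd w then (-1) ^+ w./2 else 0 : R)%:C * 2 = 'i ^+ w + (- 'i) ^+ w.
Proof.
have E : 'i ^+ w = 'i ^+ (odd w) * (-1) ^+ w./2 :> R[i].
  by rewrite -{1}(odd_double_half w) exprD -mul2n exprM sqr_i.
rewrite [(- 'i) ^+ w]exprNn E -(signr_odd _ w).
case: (odd w) => /=; rewrite ?expr1 ?expr0 ?mul1r.
  by rewrite mul0r mulN1r subrr.
by rewrite rmorphXn rmorphN1 mulr2n mulrDr mulr1.
Qed.

Lemma Aeven n (t : R) (x : bits n) : ~~ odd (hw x) ->
  \sum_(i : bits n) (\prod_(j < n) Emat t (x j) (i j)) * psi R i =
  (Num.sqrt 2 ^+ n.-1)^-1 * ((-1) ^+ (hw x)./2 * cos (n%:R * t)).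
Proof.
move=> ev.
set c := (Num.sqrt 2 ^+ n.-1)^-1.
have psiE (i : bits n) : psi R i = c * (if ~~ odd (hw i) then (-1) ^+ (hw i)./2 else 0 : R).
  by rewrite /psi; case: ifP; rewrite ?mulr0.
under eq_bigr do rewrite psiE mulrCA.
rewrite -mulr_sumr; congr (_ * _).
apply: (mulIf (x := 2)); first by rewrite pnatr_eq0.
apply: complexI.
rewrite rmorphM rmorph_nat rmorph_sum mulr_suml.
under eq_bigr do rewrite rmorphM -mulrA gC mulrDr.
rewrite big_split /= (key _ _ _ _ (row1 t)) (key _ _ _ _ (row2 t)) demoivre demoivreN.
have E : 'i ^+ (hw x) = ((-1) ^+ (hw x)./2 : R)%:C :> R[i].
  by rewrite -{1}(odd_double_half (hw x)) (negbTE ev) add0n -mul2n exprM sqr_i rmorphXn rmorphN1.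
rewrite [(- 'i) ^+ _]exprNn -(signr_odd _ (hw x)) (negbTE ev) expr0 mul1r E.
rewrite !rmorphM /=.
apply/eqP; rewrite eq_complex /=; apply/andP; split; apply/eqP; ring.
Qed.

Definition dk (eta : R) (k r : bool) : R :=
  if k then Num.sqrt (1 - eta) * (-1) ^+ r else Num.sqrt eta.

Lemma chanE n (t eta : R) (x : bits n) : 0 <= eta -> eta <= 1 ->
  chan_out t eta x x = (\sum_(i : bits n) (\prod_(j < n) Emat t (x j) (i j)) * psi R i) ^+ 2.
Proof.
move=> e0 e1.
set A := \sum_(i : bits n) _.
have KE k i : krausN t eta k x i = (\prod_(j < n) dk eta (k j) (x j)) * \prod_(j < n) Emat t (x j) (i j).
  rewrite /krausN -big_split /=; apply: eq_bigr => j _.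
  by rewrite /kraus /dk /ZEmat; case: (k j); rewrite ?mulrA.
rewrite /chan_out.
transitivity (\sum_(k : bits n) (\prod_(j < n) dk eta (k j) (x j)) ^+ 2 * A ^+ 2).
  apply: eq_bigr => k _.
  rewrite -exprMn /A mulr_sumr expr2 big_distrl /=; apply: eq_bigr => i _.
  rewrite big_distrr /=; apply: eq_bigr => l _.
  rewrite !KE /rho; ring.
rewrite -big_distrl /=.
transitivity (1 * A ^+ 2); last by rewrite mul1r.
congr (_ * _).
under eq_bigr do rewrite -prodrXl.
rewrite -(bigA_distr_bigA (R := R) (fun (j:'I_n) (b:bool) => dk eta b (x j) ^+ 2)) /=.
apply: big1 => j _.
rewrite big_bool /dk exprMn sqr_sqrtr ?subr_ge0 // sqr_sqrtr //.
by case: (x j); rewrite /= ?expr1 ?expr0 ?sqrrN ?expr1n ?mulr1 subrK.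
Qed.

Lemma count_even n : (0 < n)%N ->
  (\sum_(x : bits n | ~~ odd (hw x)) 1 : R) = 2 ^+ n.-1.
Proof.
case: n => // n _ /=.
apply: (mulfI (x := 2)); first by rewrite pnatr_eq0.
have S1 : \sum_(x : bits n.+1) (1 : R) = 2 ^+ n.+1.
  rewrite sumr_const /bits card_ffun card_bool card_ord.
  by rewrite -natrX.
have S2 : \sum_(x : bits n.+1) ((-1) ^+ hw x : R) = 0.
  transitivity (\sum_(x : {ffun 'I_n.+1 -> bool}) \prod_(j < n.+1) ((-1) ^+ x j : R)).
    by apply: eq_bigr => x _; rewrite /hw expr_sum.
  rewrite -(bigA_distr_bigA (R := R) (fun (j:'I_n.+1) (b:bool) => ((-1) ^+ b : R))) /=.
  rewrite big_bool /= expr1 expr0 addNr prodr_const card_ord expr0n /=.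
  exact: mulr0n.
transitivity (\sum_(x : bits n.+1) (1:R) + \sum_(x : bits n.+1) ((-1) ^+ hw x : R)); last first.
  by rewrite S1 S2 addr0 exprS.
rewrite -big_split /= mulr_sumr big_mkcond /=.
apply: eq_bigr => x _; rewrite -signr_odd.
by case: (odd (hw x)) => /=; rewrite ?mulr0 ?expr1 ?subrr // expr0 mulr1.
Qed.
End P.

Theorem mainTheorem4 (R : realType) (n : nat) (theta eta : R) :
  (1 <= n)%N -> 0 <= theta -> theta <= pi / 2 -> 0 <= eta -> eta <= 1 ->
  @prob_even R n theta eta = cos (n%:R * theta) ^+ 2.
Proof.
move=> n1 _ _ e0 e1.
rewrite /prob_even.
under eq_bigr => x ev do rewrite chanE // Aeven // exprMn exprMn -exprM mulnC exprM sqrrN expr1n expr1n mul1r.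
rewrite -big_distrl /=.
set c := Num.sqrt 2 ^- n.-1 ^+ 2.
have -> : \sum_(x : bits n | ~~ odd (hw x)) c = c * \sum_(x : bits n | ~~ odd (hw x)) 1.
  by rewrite mulr_sumr; apply: eq_bigr => x _; rewrite mulr1.
rewrite count_even // /c exprVn -exprM mulnC exprM sqr_sqrtr ?ler0n // mulVf ?mul1r //.

Qed.
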